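(* Let $c\neq-\frac{22}{5}$. For all integers $n\ge1$, the following identity holds in $\mathcal{W}^c_3$: $$U_{0,0}\circ_0\partial^{n-1}W-\frac{64}{22+5c}\partial^n(:LLW:)+\frac{64}{22+5c}\partial^{n-1}(:(\partial L)LW:)-\frac{10(14+c)}{3(22+5c)}\partial^{n+2}(:LW:)$$ $$+\frac{86+5c}{22+5c}\partial^{n+1}(:(\partial L)W:)-\frac{26+3c}{22+5c}\partial^n(:(\partial^2L)W:)+\frac{2(c-2)}{3(22+5c)}\partial^{n-1}(:(\partial^3L)W:)-\frac{-186+11c+c^2}{36(22+5c)}\partial^{n+4}W=0.$$
   Context: For vertex algebra elements, $a(z)b(w)\sim\sum_{n\ge0}(a\circ_nb)(w)(z-w)^{-n-1}$ and $:ab:$ is the normally ordered product; iterated products are nested to the right, e.g. $:LLW:=\,:L(:LW:):$. For $c\ne-\frac{22}{5}$, $\mathcal{W}^c_3$ is the vertex algebra strongly generated by a Virasoro field $L$ and a weight $3$ primary field $W$ with OPEs $L(z)L(w)\sim \frac c2(z-w)^{-4}+2L(w)(z-w)^{-2}+\partial L(w)(z-w)^{-1}$, $L(z)W(w)\sim 3W(w)(z-w)^{-2}+\partial W(w)(z-w)^{-1}$, $W(z)W(w)\sim \frac c3(z-w)^{-6}+2L(w)(z-w)^{-4}+\partial L(w)(z-w)^{-3}+\big(\frac{32}{22+5c}:LL:+\frac{3(c-2)}{2(22+5c)}\partial^2L\big)(w)(z-w)^{-2}+\big(\frac{32}{22+5c}:(\partial L)L:+\frac{c-2}{3(22+5c)}\partial^3L\big)(w)(z-w)^{-1}$.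 $U_{0,0}=\,:WW:$. *)

(* Defs.v *)
From HB Require Import structures.
From mathcomp Require Import all_boot all_order all_algebra.
Set Implicit Arguments. Unset Strict Implicit. Unset Printing Implicit Defensive.
Import Order.TTheory GRing.Theory Num.Theory.
Local Open Scope ring_scope.

Definition binz (m : int) (j : nat) : int :=
  if (0 <= m) then ('C(absz m, j))%:Z
  else (-1) ^+ j * ('C(j + absz m - 1, j))%:Z.

Section VA.
Variables (K : fieldType) (V : lmodType K).
Variables (vac : V) (prod : int -> V -> V -> V).
(* prod n a b  =  a_(n) b  =  a \circ_n b *)

Definition vD (a : V) : V := prod (-2) a vac.
Definition vNO (a b : V) : V := prod (-1) a b.

Definition vertex_algebra : Prop :=
  [/\
      (forall n k a b x, prod n (k *: a + b) x = k *: prod n a x + prod n b x),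
      (forall n k a x y, prod n a (k *: x + y) = k *: prod n a x + prod n a y),
      (forall a b, exists N : int, forall n, N <= n -> prod n a b = 0),
      (forall a, prod (-1) a vac = a) /\
      (forall a n, 0 <= n -> prod n a vac = 0) /\
      (forall a n, prod n vac a = if n == -1 then a else 0)
    &
      (forall a b x (m n k : int) (N : nat),
         (forall j : nat, (N <= j)%N ->
            [/\ prod (n + j%:Z) a b = 0, prod (k + j%:Z) b x = 0
              & prod (m + j%:Z) a x = 0]) ->
         \sum_(j < N) (binz m j)%:~R *: prod (m + k - j%:Z) (prod (n + j%:Z) a b) x
         = \sum_(j < N) ((-1) ^+ j * binz n j)%:~R *:
              (prod (m + n - j%:Z) a (prod (k + j%:Z) b x)
               - (-1) ^+ (absz n) *: prod (n + k - j%:Z) b (prod (m + j%:Z) a x)))].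

(* V is strongly generated by gens: spanned by |0> and the normally ordered
   monomials :(\partial^{i1} g1)(:(\partial^{i2} g2)( ... |0>)...):. *)
Definition strongly_generated (gens : seq V) : Prop :=
  forall P : V -> Prop,
    P vac ->
    (forall u v, P u -> P v -> P (u + v)) ->
    (forall k u, P u -> P (k *: u)) ->
    (forall g i u, g \in gens -> P u -> P (vNO (iter i vD g) u)) ->
    forall v, P v.

(* The OPEs defining W_3^c, written through the products a \circ_n b. *)
Definition W3_relations (c : K) (L W : V) : Prop :=
  [/\
      [/\ prod 3 L L = (c / 2%:R) *: vac, prod 2 L L = 0,
          prod 1 L L = 2%:R *: L, prod 0 L L = vD L
        & forall n, 4 <= n -> prod n L L = 0],
      [/\ prod 1 L W = 3%:R *: W, prod 0 L W = vD W
        & forall n, 2 <= n -> prod n L W = 0]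
    &
      [/\ [/\ prod 5 W W = (c / 3%:R) *: vac, prod 4 W W = 0,
          prod 3 W W = 2%:R *: L & prod 2 W W = vD L],
          prod 1 W W = (32%:R / (22%:R + 5%:R * c)) *: vNO L L
                       + (3%:R * (c - 2%:R) / (2%:R * (22%:R + 5%:R * c))) *: iter 2 vD L,
          prod 0 W W = (32%:R / (22%:R + 5%:R * c)) *: vNO (vD L) L
                       + ((c - 2%:R) / (3%:R * (22%:R + 5%:R * c))) *: iter 3 vD L
        & forall n, 6 <= n -> prod n W W = 0]].

End VA.

(* Main.v *)
Require Import Defs.
From HB Require Import structures.
From mathcomp Require Import all_boot all_order all_algebra.
From mathcomp Require Import zify ring lra.
Set Implicit Arguments. Unset Strict Implicit. Unset Printing Implicit Defensive.
Import Order.TTheory GRing.Theory Num.Theory.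
Local Open Scope ring_scope.

Section C.
Variables (K : fieldType) (V : lmodType K).
Definition comb (v : 'I_7 -> V) (r : 'rV[K]_7) : V := \sum_i r 0 i *: v i.
Lemma combD v r s : comb v (r + s) = comb v r + comb v s.
Proof. by rewrite /comb -big_split; apply: eq_bigr => i _; rewrite mxE scalerDl. Qed.
Lemma combZ v k r : comb v (k *: r) = k *: comb v r.
Proof. by rewrite /comb scaler_sumr; apply: eq_bigr => i _; rewrite mxE scalerA. Qed.
Lemma combN v r : comb v (- r) = - comb v r.
Proof. by rewrite /comb -sumrN; apply: eq_bigr => i _; rewrite mxE scaleNr. Qed.
Lemma combE v i : comb v (delta_mx 0 i) = v i.
Proof.
rewrite /comb (bigD1 i) //= big1 ?addr0 => [|j Hj]; rewrite mxE ?eqxx ?scale1r //.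
by rewrite (negbTE Hj) scale0r.
Qed.
Lemma comb_eq0 v r : r = 0 -> comb v r = 0.
Proof. by move=> ->; rewrite /comb big1 // => i _; rewrite mxE scale0r. Qed.
End C.
Definition o7 (k : nat) (H : (k < 7)%N) : 'I_7 := Ordinal H.

Section Aux.
Variables (K : fieldType) (V : lmodType K) (vac : V) (prod : int -> V -> V -> V).
Hypothesis HVA : vertex_algebra vac prod.

Lemma prodDl n a b x : prod n (a + b) x = prod n a x + prod n b x.
Proof. case: HVA => H1 _ _ _ _. by have := H1 n 1 a b x; rewrite !scale1r. Qed.
Lemma prodDr n a x y : prod n a (x + y) = prod n a x + prod n a y.
Proof. case: HVA => _ H1 _ _ _. by have := H1 n 1 a x y; rewrite !scale1r. Qed.
Lemma prod0l n x : prod n 0 x = 0.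
Proof.
have := prodDl n 0 0 x; rewrite addr0 => /(congr1 (fun z => z - prod n 0 x)).
by rewrite subrr addrK => <-.
Qed.
Lemma prod0r n a : prod n a 0 = 0.
Proof.
have := prodDr n a 0 0; rewrite addr0 => /(congr1 (fun z => z - prod n a 0)).
by rewrite subrr addrK => <-.
Qed.
Lemma prodZl n k a x : prod n (k *: a) x = k *: prod n a x.
Proof. case: HVA => H1 _ _ _ _. by have := H1 n k a 0 x; rewrite !addr0 prod0l addr0. Qed.
Lemma prodZr n k a x : prod n a (k *: x) = k *: prod n a x.
Proof. case: HVA => _ H1 _ _ _. by have := H1 n k a x 0; rewrite !addr0 prod0r addr0. Qed.
Lemma prodNl n a x : prod n (- a) x = - prod n a x.
Proof. by rewrite -scaleN1r prodZl scaleN1r. Qed.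
Lemma prodNr n a x : prod n a (- x) = - prod n a x.
Proof. by rewrite -scaleN1r prodZr scaleN1r. Qed.
Lemma prodBl n a b x : prod n (a - b) x = prod n a x - prod n b x.
Proof. by rewrite prodDl prodNl. Qed.
Lemma prodBr n a x y : prod n a (x - y) = prod n a x - prod n a y.
Proof. by rewrite prodDr prodNr. Qed.

Lemma trunc a b : exists N : int, forall n, N <= n -> prod n a b = 0.
Proof. by case: HVA => _ _ H _ _. Qed.
Lemma vac_r a : prod (-1) a vac = a.
Proof. by case: HVA => _ _ _ [H _] _. Qed.
Lemma vac_pos a n : 0 <= n -> prod n a vac = 0.
Proof. by case: HVA => _ _ _ [_ [H _]] _; apply: H. Qed.
Lemma vac_l a n : prod n vac a = if n == -1 then a else 0.
Proof. by case: HVA => _ _ _ [_ [_ H]] _. Qed.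
Lemma bor a b x (m n k : int) (N : nat) :
  (forall j : nat, (N <= j)%N ->
     [/\ prod (n + j%:Z) a b = 0, prod (k + j%:Z) b x = 0
       & prod (m + j%:Z) a x = 0]) ->
  \sum_(j < N) (binz m j)%:~R *: prod (m + k - j%:Z) (prod (n + j%:Z) a b) x
  = \sum_(j < N) ((-1) ^+ j * binz n j)%:~R *:
       (prod (m + n - j%:Z) a (prod (k + j%:Z) b x)
        - (-1) ^+ (absz n) *: prod (n + k - j%:Z) b (prod (m + j%:Z) a x)).
Proof. by case: HVA => _ _ _ _ H; apply: H. Qed.

Lemma sum_trunc (N M : nat) (F : nat -> V) : (M <= N)%N ->
  (forall j, (M <= j)%N -> F j = 0) -> \sum_(j < N) F j = \sum_(0 <= j < M) F j.
Proof.
move=> HMN HF; rewrite -(big_mkord xpredT) (big_cat_nat (leq0n M) HMN) /=.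
rewrite [X in _ + X]big_nat_cond [X in _ + X]big1 ?addr0 // => j /andP [/andP [Hj _] _].
exact: HF.
Qed.

Lemma binz0 j : binz 0 j = (j == 0)%N%:Z.
Proof. by rewrite /binz lexx bin0n. Qed.
Lemma binz_0 p : binz p 0 = 1.
Proof. by rewrite /binz; case: ifP; rewrite bin0 ?expr0 ?mul1r. Qed.
Lemma binz_1 p : binz p 1 = p.
Proof.
rewrite /binz; case: ifP => H; rewrite bin1 //.
  by rewrite gez0_abs.
rewrite expr1 mulN1r; move: H; lia.
Qed.
Lemma binzN1 j : binz (-1) j = (-1) ^+ j.
Proof. by rewrite /binz /= addn1 subn1 /= binn mulr1. Qed.
Lemma binzN2 j : binz (-2) j = (-1) ^+ j * (j.+1)%:Z.
Proof. by rewrite /binz /= addn2 subn1 /= binSn. Qed.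

Lemma scale_int0 (z : int) (x : V) : z = 0 -> z%:~R *: x = 0.
Proof. by move=> ->; rewrite scale0r. Qed.

Notation D := (vD vac prod).

Lemma sum1 N (F : nat -> V) : (1 <= N)%N -> (forall j, (1 <= j)%N -> F j = 0) ->
  \sum_(j < N) F j = F 0%N.
Proof.
move=> HN HF; rewrite (sum_trunc HN HF) big_ltn // big_geq // addr0 //.
Qed.
Lemma sum2 N (F : nat -> V) : (2 <= N)%N -> (forall j, (2 <= j)%N -> F j = 0) ->
  \sum_(j < N) F j = F 0%N + F 1%N.
Proof.
move=> HN HF; rewrite (sum_trunc HN HF) big_ltn // big_ltn // big_geq // addr0 //.
Qed.


Definition FL a b x (m n k : int) (j : nat) :=
  (binz m j)%:~R *: prod (m + k - j%:Z) (prod (n + j%:Z) a b) x.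
Definition FR a b x (m n k : int) (j : nat) :=
  ((-1) ^+ j * binz n j)%:~R *:
       (prod (m + n - j%:Z) a (prod (k + j%:Z) b x)
        - (-1) ^+ (absz n) *: prod (n + k - j%:Z) b (prod (m + j%:Z) a x)).
Lemma bor' a b x (m n k : int) (N : nat) :
  (forall j : nat, (N <= j)%N ->
     [/\ prod (n + j%:Z) a b = 0, prod (k + j%:Z) b x = 0
       & prod (m + j%:Z) a x = 0]) ->
  \sum_(j < N) FL a b x m n k j = \sum_(j < N) FR a b x m n k j.
Proof. exact: bor. Qed.

Lemma Dprod p a y : D (prod p a y) = prod p a (D y) - p%:~R *: prod (p - 1) a y.
Proof.
have [N0 HN0] := trunc a y.
have := @bor' a y vac 0 p (-2) (maxn (absz (N0 - p)) 2) (fun j Hj =>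
  ltac:(split; [apply: HN0; lia | apply: vac_pos; lia | apply: vac_pos; lia])).
rewrite (@sum1 _ (FL a y vac 0 p (-2))); first last.
- by move=> j Hj; apply: scale_int0; rewrite binz0; case: j Hj.
- lia.
rewrite (@sum2 _ (FR a y vac 0 p (-2))); first last.
- move=> j Hj; rewrite /FR (@vac_pos _ (0 + j%:Z)) ?prod0r; last lia.
  rewrite (@vac_pos _ (-2 + j%:Z)); last lia.
  by rewrite prod0r scaler0 subr0 scaler0.
- lia.
rewrite /FL /FR /= binz0 binz_0 binz_1 expr0 expr1 !mul1r mulN1r.
rewrite (_ : 0 - 2 - (0%N)%:Z = -2) // (_ : p + (0%N)%:Z = p) ?addr0 //.
rewrite /= add0r (_ : p - (1%N)%:Z = p - 1) //.
rewrite (_ : -2 + (1%N)%:Z = -1) // vac_r.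
rewrite !(@vac_pos a) // !prod0r !scaler0 !subr0 mulr1z scale1r mulrNz scaleNr.
by rewrite /vD !scale1r => <-.
Qed.
Lemma Dvac : D vac = 0.
Proof. by rewrite /vD vac_l. Qed.

Lemma FRv a x i j : FR a vac x 0 (-2) (Negz i) j =
  if (j == i)%N then (j.+1)%:R *: prod (Negz j.+1) a x else 0.
Proof.
rewrite /FR !vac_l.
have -> : (-2 + Negz i - j%:Z == -1) = false by apply/eqP; lia.
rewrite /= scaler0 subr0.
case: (eqVneq j i) => [->|/eqP Hji].
- have -> : (Negz i + i%:Z == -1) by apply/eqP; lia.
  rewrite binzN2 mulrA -exprMn mulrNN mulr1 expr1n mul1r.
  rewrite (_ : 0 + -2 - i%:Z = Negz i.+1); last lia.
  by rewrite pmulrn.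
- have -> : (Negz i + j%:Z == -1) = false by apply/eqP; lia.
  by rewrite /= prod0r scaler0.
Qed.

Lemma Dmode a x i : prod (Negz i) (D a) x = (i.+1)%:R *: prod (Negz i.+1) a x.
Proof.
have [N0 HN0] := trunc a x.
have := @bor' a vac x 0 (-2) (Negz i) (maxn (maxn 2 i.+1) (absz N0)) (fun j Hj =>
  ltac:(split; [apply: vac_pos; lia | rewrite vac_l; case: eqP => //; lia
               | apply: HN0; lia])).
rewrite (@sum1 _ (FL a vac x 0 (-2) (Negz i))); first last.
- by move=> j Hj; apply: scale_int0; rewrite binz0; case: j Hj.
- lia.
rewrite (@sum_trunc _ i.+1 (FR a vac x 0 (-2) (Negz i))); first last.
- by move=> j Hj; rewrite FRv; case: eqP => // Hji; lia.
- lia.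
rewrite big_nat_recr //= big_nat_cond big1 ?add0r; last first.
  by move=> j /andP [/andP [_ Hj] _]; rewrite FRv; case: eqP => // Hji; lia.
rewrite FRv eqxx /FL binz0 /=.
rewrite (_ : 0 + Negz i - (0%N)%:Z = Negz i); last lia.
rewrite (_ : -2 + (0%N)%:Z = -2) // mulr1z scale1r.
by move=> <-.
Qed.

Lemma comm a b x m k J : (forall j : nat, (J <= j)%N -> prod j%:Z a b = 0) ->
  prod m a (prod k b x) - prod k b (prod m a x) =
  \sum_(j < J) (binz m j)%:~R *: prod (m + k - j%:Z) (prod j%:Z a b) x.
Proof.
move=> HJ.
have [N1 H1] := trunc b x; have [N2 H2] := trunc a x.
have := @bor' a b x m 0 k (maxn (maxn J 1) (maxn (absz (N1 - k)) (absz (N2 - m))))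
  (fun j Hj => ltac:(split; [rewrite add0r; apply: HJ; lia
                            | apply: H1; lia | apply: H2; lia])).
rewrite (@sum1 _ (FR a b x m 0 k)); first last.
- by move=> j Hj; apply: scale_int0; rewrite binz0; case: j Hj => // j _; rewrite mulr0.
- lia.
rewrite (@sum_trunc _ J (FL a b x m 0 k)); first last.
- by move=> j Hj; rewrite /FL add0r HJ // prod0l scaler0.
- lia.
rewrite big_mkord /FR /= binz0 /= expr0 mulr1 addr0 subr0 add0r mulr1z scale1r.
have e1 : k + (0%N)%:Z = k by lia. have e2 : k - (0%N)%:Z = k by lia.
rewrite e1 expr0 scale1r => <-.
by apply: eq_bigr => j _; rewrite /FL add0r.
Qed.

Lemma NO0 a J : (forall j : nat, (J <= j)%N -> prod j%:Z a a = 0) ->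
  prod 0 (prod (-1) a a) a = \sum_(0 <= j < J) 2%:R *: prod (Negz j) a (prod j%:Z a a).
Proof.
move=> HJ.
have := @bor' a a a 0 (-1) 0 J.+1
  (fun j Hj => ltac:(split; [rewrite (_ : -1 + j%:Z = (j.-1)%:Z); [apply: HJ; lia | lia]
                            | rewrite add0r; apply: HJ; lia
                            | rewrite add0r; apply: HJ; lia])).
rewrite (@sum1 _ (FL a a a 0 (-1) 0)); first last.
- by move=> j Hj; apply: scale_int0; rewrite binz0; case: j Hj.
- lia.
rewrite (@sum_trunc _ J (FR a a a 0 (-1) 0)); first last.
- by move=> j Hj; rewrite /FR add0r HJ // !prod0r scaler0 subr0 scaler0.
- lia.
rewrite /FL binz0 /= mulr1z scale1r.
rewrite (_ : 0 + 0 - (0%N)%:Z = 0) // (_ : -1 + (0%N)%:Z = -1) // => ->.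
apply: eq_big_nat => j _.
rewrite /FR binzN1 -exprMn mulrNN mulr1 expr1n mulr1z scale1r add0r.
rewrite (_ : 0 + -1 - j%:Z = Negz j); last lia.
rewrite add0r.
by rewrite expr1 scaleN1r opprK scaler_nat mulr2n.
Qed.
End Aux.

Section Main.
Variables (K : fieldType) (V : lmodType K) (vac : V) (prod : int -> V -> V -> V).
Hypothesis HVA : vertex_algebra vac prod.
Variables (c : K) (L W : V).
Hypothesis HW3 : W3_relations vac prod c L W.
Notation D := (vD vac prod).

Definition l a y := prod (Negz a) L y.
Definition w a y := prod (Negz a) W y.

Lemma Lvac : L = l 0 vac. Proof. by rewrite /l (vac_r HVA). Qed.
Lemma Wvac : W = w 0 vac. Proof. by rewrite /w (vac_r HVA). Qed.
Lemma lD a x y : l a (x + y) = l a x + l a y. Proof. exact: (prodDr HVA). Qed.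
Lemma lZ a k x : l a (k *: x) = k *: l a x. Proof. exact: (prodZr HVA). Qed.
Lemma lN a x : l a (- x) = - l a x. Proof. exact: (prodNr HVA). Qed.
Lemma l0 a : l a 0 = 0. Proof. exact: (prod0r HVA). Qed.
Lemma wD a x y : w a (x + y) = w a x + w a y. Proof. exact: (prodDr HVA). Qed.
Lemma wZ a k x : w a (k *: x) = k *: w a x. Proof. exact: (prodZr HVA). Qed.
Lemma wN a x : w a (- x) = - w a x. Proof. exact: (prodNr HVA). Qed.
Lemma w0 a : w a 0 = 0. Proof. exact: (prod0r HVA). Qed.
Lemma DD x y : D (x + y) = D x + D y. Proof. exact: (prodDl HVA). Qed.
Lemma DZ k x : D (k *: x) = k *: D x. Proof. exact: (prodZl HVA). Qed.
Lemma DN x : D (- x) = - D x. Proof. exact: (prodNl HVA). Qed.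
Lemma D0 : D 0 = 0. Proof. exact: (prod0l HVA). Qed.

Lemma negzR a : (Negz a)%:~R = - (a.+1)%:R :> K.
Proof. by rewrite NegzE mulrNz pmulrn. Qed.

Lemma Dl a y : D (l a y) = l a (D y) + (a.+1)%:R *: l a.+1 y.
Proof.
rewrite /l Dprod // (_ : Negz a - 1 = Negz a.+1); last lia.
by rewrite negzR scaleNr opprK.
Qed.
Lemma Dw a y : D (w a y) = w a (D y) + (a.+1)%:R *: w a.+1 y.
Proof.
rewrite /w Dprod // (_ : Negz a - 1 = Negz a.+1); last lia.
by rewrite negzR scaleNr opprK.
Qed.

Lemma NOL y : vNO prod L y = l 0 y. Proof. by []. Qed.
Lemma NODL y : vNO prod (D L) y = l 1 y.
Proof. by rewrite /vNO (@Dmode _ _ _ _ HVA L y 0) scale1r. Qed.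
Lemma NODDL y : vNO prod (D (D L)) y = 2%:R *: l 2 y.
Proof. by rewrite /vNO (@Dmode _ _ _ _ HVA (D L) y 0) (@Dmode _ _ _ _ HVA L y 1) scale1r. Qed.
Lemma NODDDL y : vNO prod (D (D (D L))) y = 6%:R *: l 3 y.
Proof.
rewrite /vNO (@Dmode _ _ _ _ HVA (D (D L)) y 0) (@Dmode _ _ _ _ HVA (D L) y 1).
rewrite (@Dmode _ _ _ _ HVA L y 2) scale1r scalerA; congr (_ *: _).
by rewrite -natrM.
Qed.

Lemma LWc a b y : w b (l a y) = l a (w b y) - (((a+b).+2)%:R - 3%:R * (a.+1)%:R) *: w (a+b).+2 y.
Proof.
case: HW3 => _ [LW1 LW0 LWn] _.
have H := @comm _ _ _ _ HVA L W y (Negz a) (Negz b) 2 (fun j Hj => LWn j%:Z ltac:(lia)).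
rewrite !big_ord_recl big_ord0 /= in H.
rewrite LW0 LW1 binz_0 binz_1 mulr1z scale1r addr0 in H.
rewrite /bump /= addr0 (_ : Negz a + Negz b = Negz (a+b).+1) in H; last lia.
rewrite (_ : Negz (a+b).+1 - (1%N)%:Z = Negz (a+b).+2) in H; last lia.
rewrite (Dmode HVA) (prodZl HVA) scalerA -scalerDl negzR in H.
move/eqP: H; rewrite subr_eq => /eqP; rewrite /l /w => ->.
rewrite (_ : ((a+b).+2)%:R + - (a.+1)%:R * 3%:R = ((a+b).+2)%:R - 3%:R * (a.+1)%:R :> K);
  last by ring.
by rewrite [RHS]addrC addKr.
Qed.
Lemma LLc a b y : l a (l b y) = l b (l a y) + (((a+b).+2)%:R - 2%:R * (a.+1)%:R) *: l (a+b).+2 y.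
Proof.
case: HW3 => [[LL3 LL2 LL1 LL0 LLn] _ _].
have H := @comm _ _ _ _ HVA L L y (Negz a) (Negz b) 4 (fun j Hj => LLn j%:Z ltac:(lia)).
rewrite !big_ord_recl big_ord0 in H.
simpl in H; unfold bump in H; simpl in H.
rewrite LL0 LL1 LL2 LL3 binz_0 binz_1 mulr1z scale1r addr0 in H.
rewrite (prod0l HVA) scaler0 !(prodZl HVA) (vac_l HVA) in H.
move: H; case: eqP => [?|_]; first lia.
rewrite !scaler0 !addr0 => H.
rewrite (_ : Negz a + Negz b = Negz (a+b).+1) in H; last lia.
rewrite (_ : Negz (a+b).+1 - (1 + 0)%N%:Z = Negz (a+b).+2) in H; last lia.
rewrite (Dmode HVA) scalerA -scalerDl negzR in H.
move/eqP: H; rewrite subr_eq => /eqP; rewrite /l => ->.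
rewrite (_ : ((a+b).+2)%:R + - (a.+1)%:R * 2%:R = ((a+b).+2)%:R - 2%:R * (a.+1)%:R :> K);
  last by ring.
by rewrite addrC.
Qed.

Lemma P0E : prod 0 (vNO prod W W) W =
  2%:R *: w 0 (prod 0 W W) + (2%:R *: w 1 (prod 1 W W) + (2%:R *: w 2 (prod 2 W W) +
  (2%:R *: w 3 (prod 3 W W) + (2%:R *: w 4 (prod 4 W W) + (2%:R *: w 5 (prod 5 W W) + 0))))).
Proof.
case: HW3 => _ _ [_ _ _ WWn].
rewrite /vNO (NO0 HVA (J := 6)) => [|j Hj]; last by apply: WWn; lia.
by rewrite big_ltn // big_ltn // big_ltn // big_ltn // big_ltn // big_ltn // big_geq.
Qed.

Definition E (n : nat) :=
  let D := vD vac prod in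
  let NO := vNO prod in
  let den := 22%:R + 5%:R * c in
  prod 0 (NO W W) (iter n.-1 D W)
  - (64%:R / den) *: iter n D (NO L (NO L W))
  + (64%:R / den) *: iter n.-1 D (NO (D L) (NO L W))
  - (10%:R * (14%:R + c) / (3%:R * den)) *: iter n.+2 D (NO L W)
  + ((86%:R + 5%:R * c) / den) *: iter n.+1 D (NO (D L) W)
  - ((26%:R + 3%:R * c) / den) *: iter n D (NO (iter 2 D L) W)
  + (2%:R * (c - 2%:R) / (3%:R * den)) *: iter n.-1 D (NO (iter 3 D L) W)
  - ((- 186%:R + 11%:R * c + c ^+ 2) / (36%:R * den)) *: iter n.+4 D W.

Hypothesis Hchar : [pchar K] =i pred0.
Hypothesis Hden : 22%:R + 5%:R * c != 0.

Lemma natK_neq0 n : (n.+1%:R : K) != 0.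
Proof. by rewrite ((pcharf0P K).1 Hchar). Qed.

Lemma E1_expand : E 1 = 0.
Proof.
rewrite /E /= P0E.
case: HW3 => _ _ [[WW5 WW4 WW3 WW2] WW1 WW0 _].
rewrite WW5 WW4 WW3 WW2 WW1 WW0 /=.
rewrite !NODDDL !NODDL !NODL !NOL.
rewrite [W]Wvac [L]Lvac.
rewrite !(Dl, Dw, Dvac HVA, DD, DZ, DN, D0, lD, lZ, lN, l0, wD, wZ, wN, w0).
rewrite !(LWc, lD, lZ, lN, l0, wD, wZ, wN, w0).
rewrite !(LLc 0 1) ?(lD, lZ, lN, l0).
rewrite ?(scaler0, add0r, addr0, subr0, sub0r, oppr0).
pose v : 'I_7 -> V := fun i => nth 0 [:: l 1 (l 0 (w 0 vac)); l 0 (l 0 (w 1 vac));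
   l 1 (w 2 vac); l 0 (w 3 vac); w 5 vac; l 3 (w 0 vac); l 2 (w 1 vac)] i.
rewrite -[l 1 (l 0 (w 0 vac))](combE v (@o7 0 isT)).
rewrite -[l 0 (l 0 (w 1 vac))](combE v (@o7 1 isT)).
rewrite -[l 1 (w 2 vac)](combE v (@o7 2 isT)).
rewrite -[l 0 (w 3 vac)](combE v (@o7 3 isT)).
rewrite -[w 5 vac](combE v (@o7 4 isT)).
rewrite -[l 3 (w 0 vac)](combE v (@o7 5 isT)).
rewrite -[l 2 (w 1 vac)](combE v (@o7 6 isT)).
do 30! rewrite -?combZ -?combN -?combD.
apply: comb_eq0; apply/rowP => i; rewrite !mxE /=.
have H2 := natK_neq0 1; have H3 := natK_neq0 2.
have H36 := natK_neq0 35.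
case: i => [[|[|[|[|[|[|[|i]]]]]]] Hi] //=; field;
  rewrite ?Hden ?H2 ?H3 ?H36 ?mulf_neq0 //.
Qed.

Lemma D0comm a x : prod 0 a (D x) = D (prod 0 a x).
Proof.
have [N0 HN0] := trunc HVA a x.
have := @comm _ _ _ _ HVA a x vac 0 (-2) (absz N0).+1
  (fun j Hj => HN0 j%:Z ltac:(lia)).
rewrite big_ord_recl big1 => [|j _]; last by apply: scale_int0; rewrite binz0.
rewrite (@vac_pos _ _ _ _ HVA a 0) // (prod0r HVA) subr0 addr0 binz0 /= mulr1z scale1r.
by rewrite /vD => ->.
Qed.

Lemma iterD0 m a x : prod 0 a (iter m D x) = iter m D (prod 0 a x).
Proof. by elim: m => //= m IH; rewrite D0comm IH. Qed.
Lemma iterDD m x y : iter m D (x + y) = iter m D x + iter m D y.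
Proof. by elim: m => //= m ->; rewrite DD. Qed.
Lemma iterDZ m k x : iter m D (k *: x) = k *: iter m D x.
Proof. by elim: m => //= m ->; rewrite DZ. Qed.
Lemma iterDN m x : iter m D (- x) = - iter m D x.
Proof. by elim: m => //= m ->; rewrite DN. Qed.
Lemma iterD0' m : iter m D 0 = 0.
Proof. by elim: m => //= m ->; rewrite D0. Qed.
Lemma Dit m x : D (iter m D x) = iter m D (D x).
Proof. by rewrite -iterS iterSr. Qed.

Lemma En m : E m.+1 = iter m D (E 1).
Proof.
rewrite /E /= !Dit.
rewrite !(iterDD, iterDZ, iterDN) iterD0.
by [].
Qed.

End Main.

Theorem lemma7p2 (K : fieldType) (HK : [pchar K] =i pred0) (V : lmodType K)
  (vac : V) (prod : int -> V -> V -> V) (HVA : vertex_algebra vac prod)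
  (c : K) (Hc : c != - (22%:R / 5%:R)) (L W : V)
  (HW3 : W3_relations vac prod c L W)
  (Hgen : strongly_generated vac prod [:: L; W])
  (n : nat) (Hn : (1 <= n)%N) :
  let D := vD vac prod in
  let NO := vNO prod in
  let den := 22%:R + 5%:R * c in
  prod 0 (NO W W) (iter n.-1 D W)
  - (64%:R / den) *: iter n D (NO L (NO L W))
  + (64%:R / den) *: iter n.-1 D (NO (D L) (NO L W))
  - (10%:R * (14%:R + c) / (3%:R * den)) *: iter n.+2 D (NO L W)
  + ((86%:R + 5%:R * c) / den) *: iter n.+1 D (NO (D L) W)
  - ((26%:R + 3%:R * c) / den) *: iter n D (NO (iter 2 D L) W)
  + (2%:R * (c - 2%:R) / (3%:R * den)) *: iter n.-1 D (NO (iter 3 D L) W)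
  - ((- 186%:R + 11%:R * c + c ^+ 2) / (36%:R * den)) *: iter n.+4 D W = 0.
Proof.
move=> D NO den.
have H5 : (5%:R : K) != 0 by rewrite ((pcharf0P K).1 HK).
have Hden : 22%:R + 5%:R * c != 0.
  apply: contra Hc => /eqP H; apply/eqP.
  apply: (mulfI H5).
  have -> : 5%:R * c = - 22%:R :> K by apply/eqP; rewrite -addr_eq0 addrC H.
  by field.
case: n Hn => // m _.
have HE := En HVA L W Hden m.
rewrite (E1_expand HVA HW3 HK Hden) (iterD0' HVA) in HE.
exact: HE.
Qed.
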